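(* Let $Z$ be a finite abelian group, $q$ a prime power, and $\lambda_0,\dots,\lambda_q$ linear characters of $Z$, with $\Lambda:=\sum_{i=0}^q\lambda_i$. (i) If $\Lambda$ vanishes on $Z\setminus\{1\}$, then $|Z|$ divides $q+1$. (ii) If there is $z\in Z$ such that $\Lambda$ vanishes on $Z\setminus\{1,z\}$ and $\Lambda(z)=-(q+1)$, then $|Z|$ divides $2(q+1)$. (iii) Suppose $n\ge3$ is odd, $(n,q)\ne(3,2)$, $\lambda_0^2=1_Z$, and $\Sigma:=-\lambda_0+A\sum_{i=0}^q\lambda_i$ with $A=(q^n+1)/(q+1)$ takes values only in $\{-q^n,0\}\cup\{\pm q^i:0\le i\le n-1\}$ on $Z\setminus\{1\}$. Then either $|Z|$ divides $q+1$, or $Z$ contains an element $z$ with $\lambda_i(z)=-1$ for all $0\le i\le q$; in the latter case, if moreover $\Sigma$ is faithful, then $|Z|$ divides $2(q+1)$. *)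

(* Defs.v *)
From mathcomp Require Import all_boot all_order all_algebra all_fingroup all_solvable all_field all_character.
Set Implicit Arguments. Unset Strict Implicit. Unset Printing Implicit Defensive.

Definition prime_power (q : nat) : Prop :=
  exists p k : nat, [/\ prime p, (0 < k)%N & q = (p ^ k)%N].

(* Main.v *)
Require Import Defs.
From mathcomp Require Import all_boot all_order all_algebra all_fingroup all_solvable all_field all_character.
From mathcomp Require Import zify ring.
Import GRing.Theory Num.Theory.
Set Implicit Arguments. Unset Strict Implicit.

Lemma dvd_odd (q k : nat) : 1 <= q -> q.+1 %| q ^ (2 * k + 1) + 1.
Proof.
move=> q1; elim: k => [|k IH]; first by rewrite muln0 add0n expn1 addn1.
have E : q * q * (q ^ (2 * k + 1) + 1) = (q ^ (2 * k.+1 + 1) + 1) + (q - 1) * q.+1.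
  have -> : (2 * k.+1 + 1 = (2 * k + 1).+2)%N by lia.
  rewrite !expnS; set X := q ^ (2 * k + 1); nia.
have H := dvdn_mull (q - 1) (dvdnn q.+1).
by rewrite -(dvdn_addl (q ^ (2 * k.+1 + 1) + 1) H) -E dvdn_mull.
Qed.

Lemma expo (q n : nat) : 2 <= q -> 3 <= n -> odd n -> (n, q) != (3, 2) ->
  [/\ q ^ n = q * q * q ^ (n - 2), q <= q ^ (n - 2), (3 <= q \/ 4 <= q ^ (n - 2)),
   (q ^ n + 1) %/ q.+1 * (q + 1) = q * q * q ^ (n - 2) + 1 &
   forall i, i < n -> 1 <= q ^ i /\ (q ^ i <= q ^ (n - 2) \/ q ^ i = q * q ^ (n - 2))].
Proof.
move=> q2 n3 On Hnq.
have EqN : q ^ n = q * q * q ^ (n - 2).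
  by rewrite -mulnA -!expnS; congr (_ ^ _); lia.
have q0 : 0 < q by lia.
split => //.
- have -> : n - 2 = (n - 3).+1 by lia.
  by rewrite expnS leq_pmulr // expn_gt0 q0.
- have [q3|q2'] := leqP 3 q; first by left.
  right; have q2e : q = 2 by lia.
  have n5 : 5 <= n.
    have h3 : n != 3 by apply: contraNneq Hnq => ->; rewrite q2e.
    have h4 : n != 4 by apply: contraTneq On => ->.
    lia.
  rewrite q2e; apply: leq_trans (_ : 2 ^ 2 <= _) => //; rewrite leq_pexp2l //; lia.
- have [k Hk] : exists k, n = 2 * k + 1.
    exists n./2; rewrite -[n in LHS]odd_double_half On -muln2; lia.
  have Hd : q.+1 %| q ^ n + 1 by rewrite Hk dvd_odd //; lia.
  by rewrite (_ : q + 1 = q.+1) 1?(divnK Hd) ?EqN // addn1.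
- move=> i Hi; split; first by rewrite expn_gt0 q0.
  have [h|h] := leqP i (n - 2); first by left; rewrite leq_pexp2l.
  right; have -> : i = (n - 2).+1 by lia.
  by rewrite expnS.
Qed.
Local Open Scope ring_scope.

Lemma lin_norm (gT : finGroupType) (Z : {group gT}) (xi : 'CF(Z)) x :
  xi \is a linear_char -> x \in Z -> xi x * (xi x)^* = 1.
Proof.
move=> Hxi Hx; rewrite -lin_charV_conj // -lin_charM ?groupV // mulgV lin_char1 //.
Qed.

Lemma sum_eq_neg (k : nat) (u : 'I_k -> algC) :
  (forall i, u i * (u i)^* = 1) -> \sum_i u i = - k%:R -> forall i, u i = -1.
Proof.
move=> Hu Hs.
have H : \sum_i `|1 + u i| ^+ 2 = 0.
  rewrite (eq_bigr (fun i => 2%:R + u i + (u i)^*)); last first.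
    move=> i _; rewrite normCK rmorphD /= rmorph1.
    have := Hu i; set a := u i; set b := a^* => h.
    transitivity (1 + a + b + a * b); first ring.
    by rewrite h; ring.
  rewrite !big_split /= -rmorph_sum /= Hs rmorphN /= rmorph_nat sumr_const card_ord.
  rewrite -mulr_natl; ring.
move=> i; have := @psumr_eq0P _ _ _ _ (fun j _ => exprn_ge0 2 (normr_ge0 (1 + u j))) H i isT.
move/eqP; rewrite sqrf_eq0 normr_eq0 addrC addr_eq0 => /eqP //.
Qed.

Lemma dot_div (gT : finGroupType) (Z : {group gT}) (phi psi : 'CF(Z)) (N : nat) :
  phi \is a character -> psi \is a character ->
  \sum_(x in Z) phi x * (psi x)^* = N%:R -> (#|Z| %| N)%N.
Proof.
move=> Hp Hq HN; have := Cnat_cfdot_char Hp Hq; rewrite cfdotE HN.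
case/natrP=> k Hk.
have : N%:R = #|Z|%:R * k%:R :> algC by rewrite -Hk mulrA divff ?neq0CG ?mul1r.
by rewrite -natrM => /eqP; rewrite eqr_nat => /eqP ->; apply: dvdn_mulr.
Qed.

Lemma sum1pt (gT : finGroupType) (Z : {group gT}) (f : gT -> algC) :
  (forall x, x \in Z -> x != 1%g -> f x = 0) -> \sum_(x in Z) f x = f 1%g.
Proof.
move=> H; rewrite (bigD1 1%g) ?group1 //= big1 ?addr0 // => x /andP[Hx Hx1]; exact: H.
Qed.

Lemma sum2pt (gT : finGroupType) (Z : {group gT}) (f : gT -> algC) z :
  z \in Z -> z != 1%g ->
  (forall x, x \in Z -> x != 1%g -> x != z -> f x = 0) -> \sum_(x in Z) f x = f 1%g + f z.
Proof.
move=> Hz Hz1 H; rewrite (bigD1 1%g) ?group1 //= (bigD1 z) /=; last by rewrite Hz Hz1.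
rewrite big1 ?addr0 // => x /andP[/andP[Hx Hx1] Hxz]; exact: H.
Qed.

Lemma Lam_char (gT : finGroupType) (Z : {group gT}) (q : nat) (lambda : 'I_q.+1 -> 'CF(Z)) :
  (forall i, lambda i \is a linear_char) -> (\sum_(i < q.+1) lambda i) \is a character.
Proof. by move=> H; apply: rpred_sum => i _; apply: lin_charW. Qed.

Lemma Lam1 (gT : finGroupType) (Z : {group gT}) (q : nat) (lambda : 'I_q.+1 -> 'CF(Z)) :
  (forall i, lambda i \is a linear_char) -> (\sum_(i < q.+1) lambda i) 1%g = q.+1%:R.
Proof.
move=> H; rewrite sum_cfunE (eq_bigr (fun _ => 1)) ?sumr_const ?card_ord //.
by move=> i _; rewrite lin_char1.
Qed.

Lemma part_i (gT : finGroupType) (Z : {group gT}) (q : nat) (lambda : 'I_q.+1 -> 'CF(Z)) :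
  (forall i, lambda i \is a linear_char) ->
  (forall z, z \in Z -> z != 1%g -> (\sum_(i < q.+1) lambda i) z = 0) ->
     (#|Z| %| q.+1)%N.
Proof.
move=> Hl H0; apply: (dot_div (Lam_char Hl) (cfun1_char Z)).
rewrite (sum1pt (f := fun x => (\sum_(i < q.+1) lambda i) x * ((1 : 'CF(Z)) x)^*)).
  by rewrite Lam1 // cfun1E group1 rmorph1 mulr1.
by move=> x Hx Hx1; rewrite H0 // mul0r.
Qed.

Lemma all_neg1 (gT : finGroupType) (Z : {group gT}) (q : nat) (lambda : 'I_q.+1 -> 'CF(Z)) z :
  (forall i, lambda i \is a linear_char) -> z \in Z ->
  (\sum_(i < q.+1) lambda i) z = - (q.+1)%:R -> forall i, lambda i z = -1.
Proof.
move=> Hl Hz Hs; apply: (sum_eq_neg (u := fun i => lambda i z)).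
  by move=> i; apply: lin_norm.
by rewrite -sum_cfunE.
Qed.

Lemma part_ii (gT : finGroupType) (Z : {group gT}) (q : nat) (lambda : 'I_q.+1 -> 'CF(Z)) :
  (forall i, lambda i \is a linear_char) ->
  (exists2 z, z \in Z &
      (forall y, y \in Z -> y != 1%g -> y != z -> (\sum_(i < q.+1) lambda i) y = 0)
      /\ (\sum_(i < q.+1) lambda i) z = - (q.+1)%:R) ->
     (#|Z| %| 2 * q.+1)%N.
Proof.
move=> Hl [z Hz [H0 Hs]].
have Hz1 : z != 1%g.
  apply/eqP => E; move: Hs; rewrite E Lam1 // => /eqP.
  rewrite -addr_eq0 -natrD pnatr_eq0 //.
have Hn := all_neg1 Hl Hz Hs.
apply: (dot_div (Lam_char Hl) (lin_charW (Hl ord0))).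
rewrite (@sum2pt _ _ (fun x => (\sum_(i < q.+1) lambda i) x * ((lambda ord0) x)^*) z Hz Hz1); last first.
  by move=> x Hx Hx1 Hxz; rewrite H0 // mul0r.
by rewrite Lam1 // Hs lin_char1 // Hn rmorph1 rmorphN rmorph1 mulr1 mulrNN mulr1 -natrD addnn -mul2n.
Qed.

Lemma ntF (A q P : nat) :
  (A * (q + 1) = q * q * P + 1)%N -> (2 <= q)%N -> (q <= P)%N -> ((3 <= q)%N \/ (4 <= P)%N) ->
  [/\ (P + 1 < A)%N, (A + 1 < q * P)%N & (q * P + 1 < 2 * A)%N].
Proof.
move=> E q2 qP [q3|P4]; split; nia.
Qed.

Lemma nt (A q P t : nat) (m e1 e2 : int) :
  (A * (q + 1) = q * q * P + 1)%N -> (2 <= q)%N -> (q <= P)%N -> ((3 <= q)%N \/ (4 <= P)%N) ->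
  (1 <= t)%N -> ((t <= P)%N \/ t = (q * P)%N) -> (e1 = 1 \/ e1 = -1) -> (e2 = 1 \/ e2 = -1) ->
  A%:Z * m = e1 * t%:Z + e2 -> m = 0.
Proof.
move=> E q2 qP H3 t1 Ht He1 He2 Em.
have [F1 F2 F3] := ntF E q2 qP H3.
have : (m <= -2 \/ m = -1 \/ m = 0 \/ m = 1 \/ 2 <= m) by lia.
case=> [h|[h|[h|[h|h]]]] //; exfalso; case: Ht => Ht; case: He1 => ?; case: He2 => ?; subst; nia.
Qed.

Lemma int_of (L : algC) (A : nat) (c : int) : (0 < A)%N -> L \in Aint -> L *+ A = c%:~R ->
  exists m : int, L = m%:~R /\ A%:Z * m = c.
Proof.
move=> A0 HL E.
have HLr : L = ratr (c%:~R / A%:R).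
  by rewrite fmorph_div /= rmorph_int rmorph_nat -E -[L *+ A]mulr_natr mulfK // pnatr_eq0 -lt0n.
have : L \is a Num.int by apply: Cint_rat_Aint => //; rewrite HLr Crat_rat.
case/intrP => m Hm; exists m; split => //.
apply: (@intr_inj algC); rewrite -E Hm intrM.
by rewrite mulr_natl.
Qed.

Lemma vals (gT : finGroupType) (Z : {group gT}) (q : nat) (lambda : 'I_q.+1 -> 'CF(Z)) (n A : nat) z :
  (forall i, lambda i \is a linear_char) -> (2 <= q)%N ->
  (3 <= n)%N -> odd n -> (n, q) != (3%N, 2%N) ->
  lambda ord0 ^+ 2 = 1 -> A = ((q ^ n + 1) %/ q.+1)%N -> z \in Z ->
  let s := - lambda ord0 z + (\sum_(i < q.+1) lambda i) z *+ A in
  (s = - (q ^ n)%:R \/ s = 0 \/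
        exists2 i : nat, (i < n)%N & (s = (q ^ i)%:R \/ s = - (q ^ i)%:R)) ->
  (\sum_(i < q.+1) lambda i) z = 0 \/ (\sum_(i < q.+1) lambda i) z = - (q.+1)%:R.
Proof.
move=> Hl q2 n3 On Hnq H2 HA Hz s Hs.
have [EqN qP H3 EA Hi] := expo q2 n3 On Hnq.
rewrite -HA in EA.
set P := (q ^ (n - 2))%N in EqN qP H3 EA Hi.
have [F1 F2 F3] := ntF EA q2 qP H3.
have A0 : (0 < A)%N by lia.
have [e2 [He2 Hl0]] : exists e2 : int, (e2 = 1 \/ e2 = -1) /\ lambda ord0 z = e2%:~R.
  have := congr1 (fun f : 'CF(Z) => f z) H2; rewrite /= exp_cfunE // cfun1E Hz /= => /eqP.
  by rewrite sqrf_eq1 => /orP[]/eqP ->; [exists 1 | exists (-1)]; split; auto.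
set L := (\sum_(i < q.+1) lambda i) z.
have HL : L \in Aint by apply: Aint_char; apply: Lam_char.
have EL : L *+ A = s + e2%:~R by rewrite /s Hl0 addrC addrA addrN add0r.
case: Hs => [Hs|[Hs|[i Hin Hs]]].
- have [m [Lm Em]] : exists m : int, L = m%:~R /\ A%:Z * m = - (q ^ n)%:Z + e2.
    by apply: int_of => //; rewrite EL Hs rmorphD rmorphN.
  rewrite EqN in Em.
  case: He2 => He2; subst e2.
    exfalso.
    have E2 : A%:Z * (m + q%:Z + 1) = 2.
      have EA' : (A%:Z * (q%:Z + 1) = q%:Z * q%:Z * P%:Z + 1)%R by lia.
      nia.
    have A3 : (3 <= A)%N by lia.
    have [h|h] : (m + q%:Z + 1 <= 0 \/ 1 <= m + q%:Z + 1)%R by lia.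
      nia.
    nia.
  right; rewrite Lm.
  have E0 : A%:Z * (m + q%:Z + 1) = 0 by nia.
  have : (m + q%:Z + 1 = 0)%R.
    by move: E0 => /eqP; rewrite mulf_eq0 => /orP[/eqP|/eqP] //; lia.
  move=> h; have -> : m = - (q.+1)%:Z by lia.
  by rewrite rmorphN.
- have [m [Lm Em]] : exists m : int, L = m%:~R /\ A%:Z * m = e2.
    by apply: int_of => //; rewrite EL Hs add0r.
  exfalso; have A3 : (3 <= A)%N by lia.
  have [h|[h|h]] : (m <= -1 \/ m = 0 \/ 1 <= m)%R by lia.
  + have : (A%:Z * m <= - 3)%R by nia.
    case: He2 => He2; subst e2; lia.
  + rewrite h mulr0 in Em; case: He2 => He2; subst e2; lia.
  + have : (3 <= A%:Z * m)%R by nia.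
    case: He2 => He2; subst e2; lia.
- have [t1 Ht] := Hi i Hin.
  have [e1 [He1 Hse]] : exists e1 : int, (e1 = 1 \/ e1 = -1) /\ s = e1%:~R * (q ^ i)%:R.
    by case: Hs => ->; [exists 1 | exists (-1)]; split; auto; rewrite ?mul1r ?mulN1r.
  have [m [Lm Em]] : exists m : int, L = m%:~R /\ A%:Z * m = e1 * (q ^ i)%:Z + e2.
    by apply: int_of => //; rewrite EL Hse rmorphD rmorphM.
  left; rewrite Lm (nt EA q2 qP H3 t1 Ht He1 He2 Em) //.
Qed.

Unset Implicit Arguments. Set Strict Implicit.

Lemma cfunMnE (gT : finGroupType) (Z : {group gT}) (g : 'CF(Z)) x (A:nat) : (g *+ A) x = g x *+ A.
Proof. by elim: A => [|A IH]; rewrite ?mulr0n ?cfunE // !mulrS cfunE IH. Qed.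

Theorem mainTheorem9 (gT : finGroupType) (Z : {group gT}) (q : nat)
  (lambda : 'I_q.+1 -> 'CF(Z)) :
  abelian Z -> prime_power q ->
  (forall i, lambda i \is a linear_char) ->
  (* (i) *)
  ((forall z, z \in Z -> z != 1%g -> (\sum_(i < q.+1) lambda i) z = 0) ->
     (#|Z| %| q.+1)%N)
  /\
  (* (ii) *)
  ((exists2 z, z \in Z &
      (forall y, y \in Z -> y != 1%g -> y != z -> (\sum_(i < q.+1) lambda i) y = 0)
      /\ (\sum_(i < q.+1) lambda i) z = - (q.+1)%:R) ->
     (#|Z| %| 2 * q.+1)%N)
  /\
  (* (iii) *)
  (forall n : nat, (3 <= n)%N -> odd n -> (n, q) != (3%N, 2%N) ->
     lambda ord0 ^+ 2 = 1 ->
     let A := ((q ^ n + 1) %/ q.+1)%N in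
     let Sigma := - lambda ord0 + (\sum_(i < q.+1) lambda i) *+ A in
     (forall z, z \in Z -> z != 1%g ->
        Sigma z = - (q ^ n)%:R \/ Sigma z = 0 \/
        exists2 i : nat, (i < n)%N & (Sigma z = (q ^ i)%:R \/ Sigma z = - (q ^ i)%:R)) ->
     ((#|Z| %| q.+1)%N \/ exists2 z, z \in Z & forall i, lambda i z = -1)
     /\
     ((exists2 z, z \in Z & forall i, lambda i z = -1) ->
        cfaithful Sigma -> (#|Z| %| 2 * q.+1)%N)).
Proof.
move=> _ Hpp Hl.
have q2 : (2 <= q)%N.
  case: Hpp => p [k [pp k0 ->]].
  apply: leq_trans (prime_gt1 pp) _; rewrite -{1}(expn1 p) leq_pexp2l //.
  exact: prime_gt0.
split; first exact: part_i.
split; first exact: part_ii.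
move=> n n3 On Hnq H2 A Sigma HS.
have SigE : forall x, Sigma x = - lambda ord0 x + (\sum_(i < q.+1) lambda i) x *+ A.
  by move=> x; rewrite /Sigma cfunE cfunMnE cfunE.
have Hval : forall z, z \in Z -> z != 1%g ->
    (\sum_(i < q.+1) lambda i) z = 0 \/ (\sum_(i < q.+1) lambda i) z = - (q.+1)%:R.
  move=> z Hz Hz1; apply: (vals (n := n) (A := A)) => //.
  by rewrite -SigE; apply: HS.
split.
  case: (boolP [exists z in Z, [forall i, lambda i z == -1]]) => [/existsP[z /andP[Hz /forallP Hi]]|Hn].
    by right; exists z => // i; apply/eqP.
  left; apply: part_i => // z Hz Hz1.
  case: (Hval z Hz Hz1) => // Hm; exfalso; move/negP: Hn; apply.
  apply/existsP; exists z; rewrite Hz /=; apply/forallP => i; apply/eqP.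
  exact: all_neg1 Hl Hz Hm i.
move=> [z0 Hz0 Hi0] Hfaith; apply: part_ii => //; exists z0 => //; split; last first.
  rewrite sum_cfunE (eq_bigr (fun _ => -1)); last by move=> i _; rewrite Hi0.
  by rewrite sumr_const card_ord mulNrn.
move=> y Hy Hy1 Hyz; case: (Hval y Hy Hy1) => // Hm; exfalso.
have Hiy := all_neg1 Hl Hy Hm.
set w := (y * z0^-1)%g.
have Hw : w \in Z by rewrite groupM ?groupV.
have Hwi : forall i, lambda i w = 1.
  move=> i; have := lin_charM (Hl i) Hw Hz0; rewrite {1}/w mulgKV Hiy Hi0 mulrN1.
  by move/oppr_inj/esym.
have Hlw : forall i x, lambda i (w * x)%g = lambda i x.
  move=> i x; case: (boolP (x \in Z)) => Hx.
    by rewrite lin_charM // Hwi mul1r.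
  by rewrite !cfun0 // groupMl.
have : w \in cfker Sigma.
  rewrite inE Hw /=; apply/forallP => x; apply/eqP.
  rewrite !SigE !sum_cfunE Hlw; congr (_ + _ *+ _); apply: eq_bigr => i _; exact: Hlw.
move: Hfaith; rewrite cfaithfulE => /subsetP H /H; rewrite inE => /eqP Hw1.
by move/negP: Hyz; apply; rewrite eq_mulgV1 -/w Hw1.
Qed.
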